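(* Let $R$ be a real closed field and let $V$ be an affine $R$-variety that is the union of two closed subvarieties $V_1$ and $V_2$ intersecting transversally in a single real point. Let $f\in R[V]$. If $f|_{V_1}$ is a sum of squares in $R[V_1]$ and $f|_{V_2}$ is a sum of squares in $R[V_2]$, then $f$ is a sum of squares in $R[V]$.
   Context: A variety is a reduced separated scheme of finite type, not necessarily irreducible; $R[W]$ denotes the coordinate ring of an affine variety $W$. For closed subvarieties $V_1,V_2$ of an affine $R$-variety $V$ meeting in finitely many points $P_1,\dots,P_r$, the intersection is called transversal if $I_{V_1}+I_{V_2}=\bigcap_{i=1}^r\mathfrak{m}_{P_i}$, where $I_{W}\subset R[V]$ is the vanishing ideal of $W$ and $\mathfrak{m}_P$ is the maximal ideal of the point $P$. A point is real if its residue field is $R$. *)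

(* Defs.v *)
From HB Require Import structures.
From mathcomp Require Import all_boot all_algebra.
From mathcomp Require Import mpoly.
Set Implicit Arguments. Unset Strict Implicit. Unset Printing Implicit Defensive.
Import GRing.Theory Num.Theory.
Local Open Scope ring_scope.

(* Affine R-varieties are encoded by their coordinate rings presented as
   quotients R[x_1..x_n]/I of a polynomial ring by a radical ideal I. *)

Definition is_ideal (R : comRingType) (n : nat) (I : {mpoly R[n]} -> Prop) : Prop :=
  [/\ I 0,
      (forall p q, I p -> I q -> I (p + q)) &
      (forall p q, I q -> I (p * q))].

Definition is_radical (R : comRingType) (n : nat) (I : {mpoly R[n]} -> Prop) : Prop :=
  forall p k, I (p ^+ k.+1) -> I p.

Definition is_vanishing_ideal (R : comRingType) (n : nat) (I : {mpoly R[n]} -> Prop) : Prop :=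
  is_ideal I /\ is_radical I.

Definition ideal_sum (R : comRingType) (n : nat) (I J : {mpoly R[n]} -> Prop) :
  {mpoly R[n]} -> Prop :=
  fun p => exists a b, [/\ I a, J b & p = a + b].

Definition max_ideal_pt (R : comRingType) (n : nat) (a : 'I_n -> R) :
  {mpoly R[n]} -> Prop :=
  fun p => p.@[a] = 0.

Definition sos_mod (R : comRingType) (n : nat) (I : {mpoly R[n]} -> Prop)
  (f : {mpoly R[n]}) : Prop :=
  exists s : seq {mpoly R[n]}, I (f - \sum_(g <- s) g ^+ 2).

(* Main.v *)
Require Import Defs.
From HB Require Import structures.
From mathcomp Require Import all_boot all_algebra.
From mathcomp Require Import mpoly.
From mathcomp Require Import ring.
Import order.Order.TTheory GRing.Theory Num.Theory.
Local Open Scope ring_scope.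

Section Aux.
Variables (R : rcfType) (n : nat) (a : 'I_n -> R).
Local Notation P := {mpoly R[n]}.

Lemma sq_expand (s : seq P) (e : P -> R) (t : P) :
  \sum_(g <- s) (g - (e g)%:MP * t) ^+ 2 =
  \sum_(g <- s) g ^+ 2 - 2%:R * t * \sum_(g <- s) (e g)%:MP * g
  + t ^+ 2 * \sum_(g <- s) ((e g)%:MP) ^+ 2.
Proof.
elim: s => [|g s IH]; first by rewrite !big_nil; ring.
rewrite !big_cons IH; ring.
Qed.

Lemma decomp (s : seq P) :
  exists t (rs : seq P),
    [/\ t.@[a] = Num.sqrt (\sum_(g <- s) (g.@[a]) ^+ 2),
        all (fun r => r.@[a] == 0) rs &
        \sum_(g <- s) g ^+ 2 = t ^+ 2 + \sum_(r <- rs) r ^+ 2].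
Proof.
set c := \sum_(g <- s) (g.@[a]) ^+ 2.
have c0 : 0 <= c by apply: sumr_ge0 => g _; apply: sqr_ge0.
have [ce|cne] := eqVneq c 0.
  exists 0, s; split.
  - by rewrite ce sqrtr0 meval0.
  - move: ce => /eqP; rewrite /c psumr_eq0; last by move=> g _; apply: sqr_ge0.
    by apply: sub_all => g /= /eqP/eqP; rewrite sqrf_eq0.
  - by rewrite expr0n /= add0r.
set sq := Num.sqrt c.
have sqpos : 0 < sq by rewrite sqrtr_gt0 lt_def cne c0.
have sq2 : sq ^+ 2 = c by rewrite sqr_sqrtr.
pose e := fun g : P => g.@[a] / sq.
pose t := \sum_(g <- s) (e g)%:MP * g.
have ht : t.@[a] = sq.
  rewrite /t rmorph_sum /=.
  under eq_bigr => g _ do rewrite mevalM mevalC /e mulrAC -expr2.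
  by rewrite -mulr_suml -/c -sq2 expr2 mulrK // unitfE gt_eqF.
exists t; exists (map (fun g => g - (e g)%:MP * t) s); split.
- exact: ht.
- apply/allP => r /mapP [g _ ->] /=.
  by rewrite mevalB mevalM mevalC ht /e divfK ?subrr // gt_eqF.
- rewrite big_map sq_expand -/t.
  have -> : \sum_(g <- s) ((e g)%:MP_[n]) ^+ 2 = 1.
    have H1 : \sum_(i <- s) e i ^+ 2 = 1 :> R.
      rewrite /e; under eq_bigr => g _ do rewrite expr_div_n.
      by rewrite -mulr_suml -/c sq2 divff.
    under eq_bigr => g _ do rewrite -rmorphXn.
    by rewrite -rmorph_sum /= H1.
  ring.
Qed.
End Aux.

Section Glue.
Variables (R : rcfType) (n : nat) (a : 'I_n -> R).
Local Notation P := {mpoly R[n]}.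

Lemma idN (I : P -> Prop) p : is_ideal I -> I p -> I (- p).
Proof. by case=> _ _ hM Ip; rewrite -mulN1r; apply: hM. Qed.

Lemma idD (I : P -> Prop) p q : is_ideal I -> I p -> I q -> I (p + q).
Proof. by case=> _ hD _; apply: hD. Qed.

Lemma idB (I : P -> Prop) p q : is_ideal I -> I p -> I q -> I (p - q).
Proof. by move=> hI Ip Iq; apply: idD => //; apply: idN. Qed.

Lemma idsq (I : P -> Prop) x y : is_ideal I -> I (x - y) -> I (x ^+ 2 - y ^+ 2).
Proof.
case=> _ _ hM H.
have -> : x ^+ 2 - y ^+ 2 = (x + y) * (x - y) by ring.
exact: hM.
Qed.

Lemma glue_zero (I1 I2 : P -> Prop) : is_ideal I1 -> is_ideal I2 ->
  (forall p q, p.@[a] = q.@[a] -> exists r, I1 (r - p) /\ I2 (r - q)) ->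
  forall s : seq P, all (fun r => r.@[a] == 0) s ->
  exists s' : seq P, I1 (\sum_(g <- s') g ^+ 2 - \sum_(g <- s) g ^+ 2)
                  /\ I2 (\sum_(g <- s') g ^+ 2).
Proof.
move=> h1 h2 G; elim=> [|g s IH] /=.
  exists [::]; rewrite !big_nil subrr; split; by case: h1; case: h2.
case/andP => /eqP g0 /IH [s' [H1 H2]].
have e0 : g.@[a] = (0 : P).@[a] by rewrite g0 meval0.
have [r [r1 r2]] := G g 0 e0.
exists (r :: s'); rewrite !big_cons; split.
  have -> : r ^+ 2 + \sum_(g0 <- s') g0 ^+ 2 - (g ^+ 2 + \sum_(g0 <- s) g0 ^+ 2)
    = (r ^+ 2 - g ^+ 2) + (\sum_(g0 <- s') g0 ^+ 2 - \sum_(g0 <- s) g0 ^+ 2) by ring.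
  by apply: idD => //; apply: idsq.
apply: idD => //; rewrite subr0 in r2.
by case: h2 => _ _ hM; rewrite expr2; apply: hM.
Qed.
End Glue.

Theorem proposition2p2 (R : rcfType) (n : nat)
  (I I1 I2 : {mpoly R[n]} -> Prop)
  (hI : is_vanishing_ideal I)
  (hI1 : is_vanishing_ideal I1) (hI2 : is_vanishing_ideal I2)
  (hsub1 : forall p, I p -> I1 p) (hsub2 : forall p, I p -> I2 p)
  (hunion : forall p, (I1 p /\ I2 p) <-> I p)
  (a : 'I_n -> R)
  (htrans : forall p, ideal_sum I1 I2 p <-> max_ideal_pt a p)
  (f : {mpoly R[n]}) :
  sos_mod I1 f -> sos_mod I2 f -> sos_mod I f.
Proof.
case: hI1 => h1 _; case: hI2 => h2 _.
have z1 : I1 0 by case: h1.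
have z2 : I2 0 by case: h2.
have G12 : forall p q : {mpoly R[n]}, p.@[a] = q.@[a] ->
    exists r, I1 (r - p) /\ I2 (r - q).
  move=> p q e; have hm : max_ideal_pt a (p - q) by rewrite /max_ideal_pt mevalB e subrr.
  have [x [y [x1 y2 exy]]] := (htrans (p - q)).2 hm.
  exists (p - x); split; first by rewrite addrC addKr; apply: idN.
  have -> : p - x - q = (p - q) - x by ring.
  by rewrite exy; have -> : x + y - x = y by ring.
have G21 : forall p q : {mpoly R[n]}, p.@[a] = q.@[a] ->
    exists r, I2 (r - p) /\ I1 (r - q).
  move=> p q /esym /G12 [r [H1 H2]]; by exists r.
have ev1 : forall p, I1 p -> p.@[a] = 0.
  by move=> p Ip; apply/(htrans p).1; exists p, 0; rewrite addr0.
have ev2 : forall p, I2 p -> p.@[a] = 0.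
  by move=> p Ip; apply/(htrans p).1; exists 0, p; rewrite add0r.
case=> s1 H1; case=> s2 H2.
have e1 : \sum_(g <- s1) g.@[a] ^+ 2 = f.@[a].
  move: (ev1 _ H1); rewrite mevalB rmorph_sum /=.
  under eq_bigr => g _ do rewrite rmorphXn.
  by move/eqP; rewrite subr_eq0 => /eqP ->.
have e2 : \sum_(g <- s2) g.@[a] ^+ 2 = f.@[a].
  move: (ev2 _ H2); rewrite mevalB rmorph_sum /=.
  under eq_bigr => g _ do rewrite rmorphXn.
  by move/eqP; rewrite subr_eq0 => /eqP ->.
have [t1 [r1 [et1 a1 d1]]] := @decomp R n a s1.
have [t2 [r2 [et2 a2 d2]]] := @decomp R n a s2.
have et : t1.@[a] = t2.@[a] by rewrite et1 et2 e1 e2.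
have [T [T1 T2]] := G12 t1 t2 et.
have [K1 [K11 K12]] := @glue_zero R n a I1 I2 h1 h2 G12 r1 a1.
have [K2 [K22 K21]] := @glue_zero R n a I2 I1 h2 h1 G21 r2 a2.
exists (T :: K1 ++ K2); rewrite big_cons big_cat /=.
apply/hunion; split.
- have -> : f - (T ^+ 2 + (\sum_(g <- K1) g ^+ 2 + \sum_(g <- K2) g ^+ 2)) =
     (f - \sum_(g <- s1) g ^+ 2) - (T ^+ 2 - t1 ^+ 2)
     - (\sum_(g <- K1) g ^+ 2 - \sum_(r <- r1) r ^+ 2) - \sum_(g <- K2) g ^+ 2.
    by rewrite d1; ring.
  by apply: idB => //; apply: idB => //; apply: idB => //; apply: idsq.
- have -> : f - (T ^+ 2 + (\sum_(g <- K1) g ^+ 2 + \sum_(g <- K2) g ^+ 2)) =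
     (f - \sum_(g <- s2) g ^+ 2) - (T ^+ 2 - t2 ^+ 2)
     - \sum_(g <- K1) g ^+ 2 - (\sum_(g <- K2) g ^+ 2 - \sum_(r <- r2) r ^+ 2).
    by rewrite d2; ring.
  by apply: idB => //; apply: idB => //; apply: idB => //; apply: idsq.
Qed.
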